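(* Let $N\ge 1$ and let $X_1,\dots,X_N$ be the $N$ roots of the $N$-th Legendre polynomial, transformed to the interval $[0,1]$. For $i=1,\dots,N$ let $h_i(\xi)=\prod_{s\ne i}\frac{\xi-X_s}{X_i-X_s}$ be the Lagrange basis polynomials, so that $h_1,\dots,h_N$ form a basis of the space $\mathsf{P}_{N-1}$ of real polynomials of degree at most $N-1$. Let $m\ge 1$, let $s_1,\dots,s_m>0$ with $\sum_{k=1}^m s_k=1$, and set $o_k=\sum_{\alpha=1}^{k-1}s_\alpha$ (so $o_1=0$); thus the cell face parameter interval $[0,1]$ (coordinate $\xi$) is partitioned into the mortar intervals $[o_k,o_k+s_k]$, and on the $k$-th mortar the mortar coordinate $z\in[0,1]$ is related to $\xi$ by $\xi=o_k+s_k z$. Given any $\phi^{\Omega}\in\mathsf{P}_{N-1}$ (a function of $\xi$), define for each $k$ the polynomial $\phi^{\Xi_k}\in\mathsf{P}_{N-1}$ (a function of $z$) as the unique solution of $$\int_0^1\big(\phi^{\Xi_k}(z)-\phi^{\Omega}(o_k+s_kz)\big)h_j(z)\,dz=0\quad\text{for all }j=1,\dots,N,$$ and then define $\phi^{*\Omega}\in\mathsf{P}_{N-1}$ as the unique solution of $$\sum_{k=1}^m\int_{o_k}^{o_k+s_k}\Big(\phi^{*\Omega}(\xi)-\phi^{\Xi_k}\big(\tfrac{\xi-o_k}{s_k}\big)\Big)h_j(\xi)\,d\xi=0\quad\text{for all }j=1,\dots,N.$$ Then $\phi^{*\Omega}=\phi^{\Omega}$. Equivalently, writing $\mathbf{P}^{\Omega\to\Xi_k}$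 for the $N\times N$ matrix mapping the nodal values $(\phi^{\Omega}(X_1),\dots,\phi^{\Omega}(X_N))$ to $(\phi^{\Xi_k}(X_1),\dots,\phi^{\Xi_k}(X_N))$, and $\mathbf{P}^{\Xi_k\to\Omega}$ for the $N\times N$ matrix such that the nodal values of $\phi^{*\Omega}$ equal $\sum_{k=1}^m\mathbf{P}^{\Xi_k\to\Omega}$ applied to the nodal values of $\phi^{\Xi_k}$, one has $\sum_{k=1}^m\mathbf{P}^{\Xi_k\to\Omega}\mathbf{P}^{\Omega\to\Xi_k}=\mathbf{I}$ (the $N\times N$ identity matrix).
   Context: This is the ''outflow condition'' for projections between a cell face $\Omega$ on a nonconforming (sliding) interface and the mortar elements $\Xi_1,\dots,\Xi_m$ that subdivide it: projecting a polynomial from a cell face to its mortars and immediately projecting back reproduces the original polynomial. The matrices $\mathbf{P}^{\Xi_k\to\Omega}$ are well defined by linearity: the back-projection is linear in the tuple of mortar polynomials and decomposes as a sum of contributions from each mortar, with $\mathbf{P}^{\Xi_k\to\Omega}$ being the contribution of mortar $k$ (explicitly $\mathbf{P}^{\Xi_k\to\Omega}=s_k\mathbf{M}^{-1}\mathbf{S}_k^{\mathsf T}$ and $\mathbf{P}^{\Omega\to\Xi_k}=\mathbf{M}^{-1}\mathbf{S}_k$, where $M_{ji}=\int_0^1h_i(z)h_j(z)\,dz$ and $(\mathbf{S}_k)_{ji}=\int_0^1h_i(o_k+s_kz)h_j(z)\,dz$). *)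

(* Defs.v *)
From HB Require Import structures.
From mathcomp Require Import all_boot all_order all_algebra.
From mathcomp Require Import all_classical all_reals all_analysis.
Set Implicit Arguments. Unset Strict Implicit. Unset Printing Implicit Defensive.
Import Order.TTheory GRing.Theory Num.Theory.
Local Open Scope ring_scope.
Local Open Scope classical_set_scope.

Section Defs.
Variable R : realType.

Definition legendre (N : nat) : {poly R} :=
  ((2%:R ^+ N * (N`!)%:R)^-1) *: (derivn N (('X ^+ 2 - 1) ^+ N)).

Definition lagrange_basis (N : nat) (X : 'I_N -> R) (i : 'I_N) : {poly R} :=
  \prod_(s < N | s != i) ((X i - X s)^-1 *: ('X - (X s)%:P)).

Definition mortar_offset (m : nat) (s : 'I_m -> R) (k : 'I_m) : R :=
  \sum_(a < m | (a < k)%N) s a.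

Definition int_ab (a b : R) (f : R -> R) : R :=
  (\int[@lebesgue_measure R]_(x in `[a, b]) f x)%R.

End Defs.

(* Main.v *)
Require Import Defs.
From HB Require Import structures.
From mathcomp Require Import all_boot all_order all_algebra.
From mathcomp Require Import all_classical all_reals all_analysis.
From mathcomp Require Import zify ring lra.
Import Order.TTheory GRing.Theory Num.Theory numFieldNormedType.Exports.
Local Open Scope ring_scope.
Local Open Scope classical_set_scope.

Lemma lagrange_size (R : realType) (N : nat) (X : 'I_N -> R) (j : 'I_N) :
  (size (lagrange_basis X j) <= N)%N.
Proof.
rewrite /lagrange_basis.
apply: (leq_trans (size_poly_prod_leq _ _)).
have H : (\sum_(i < N | i != j) size ((X j - X i)^-1 *: ('X - (X i)%:P)) <=
          \sum_(i < N | i != j) 2)%N.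
  apply: leq_sum => i _; apply: (leq_trans (size_scale_leq _ _)).
  by rewrite size_XsubC.
rewrite sum_nat_const cardC1 card_ord in H.
have hc : #|[pred i : 'I_N | i != j]| = N.-1 by rewrite cardC1 card_ord.
rewrite hc.
have hN : (0 < N)%N by apply: (leq_ltn_trans (leq0n j)); exact: ltn_ord.
move: H; set S := (\sum_(i < N | i != j) _)%N; have e := prednK hN; move: e; move: (N.-1) S => n S e H; lia.
Qed.

Lemma lagrange_eval (R : realType) (N : nat) (X : 'I_N -> R) (i j : 'I_N) :
  injective X -> (lagrange_basis X j).[X i] = (i == j)%:R.
Proof.
move=> Xinj; rewrite /lagrange_basis horner_prod.
have [->|nij] := eqVneq i j.
  rewrite big1 // => s sj; rewrite hornerZ hornerXsubC mulVf //.
  by rewrite subr_eq0; apply: contra sj => /eqP /Xinj ->.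
rewrite (bigD1 i) //= hornerZ hornerXsubC subrr mulr0 mul0r.
by [].
Qed.

Lemma lagrange_interp (R : realType) (N : nat) (X : 'I_N -> R) (q : {poly R}) :
  injective X -> (size q <= N)%N ->
  q = \sum_(j < N) q.[X j] *: lagrange_basis X j.
Proof.
move=> Xinj sq; apply/eqP; rewrite -subr_eq0; apply/eqP.
set r := _ - _.
have rX : forall i, r.[X i] = 0.
  move=> i; rewrite /r hornerD hornerN horner_sum.
  rewrite (bigD1 i) //= big1 ?addr0.
    by rewrite hornerZ lagrange_eval // eqxx mulr1 subrr.
  by move=> k ki; rewrite hornerZ lagrange_eval // eq_sym (negbTE ki) mulr0.
apply/eqP; apply/negPn/negP => r0.
have := max_poly_roots r0 (rs := map X (enum 'I_N)).
rewrite size_map size_enum_ord.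
have sr : (size r <= N)%N.
  rewrite /r; apply: (leq_trans (size_polyD _ _)); rewrite geq_max sq /=.
  rewrite size_polyN; apply: (leq_trans (size_sum _ _ _)).
  apply/bigmax_leqP => k _; apply: (leq_trans (size_scale_leq _ _)).
  exact: lagrange_size.
move=> H; have : (N < size r)%N.
  apply: H.
  - by apply/allP => x /mapP [i _ ->]; rewrite /root rX.
  - by rewrite map_inj_uniq ?enum_uniq.
by rewrite ltnNge sr.
Qed.

Section An.
Variable R : realType.
Implicit Types (a b : R) (p q : {poly R}).

Lemma exists_nonroot (a b : R) (p : {poly R}) : a < b -> p != 0 ->
  exists c, a < c < b /\ p.[c] != 0.
Proof.
move=> ab p0.
pose n := size p.
pose f (i : nat) := a + (b - a) * ((i.+1)%:R / (n.+1)%:R).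
have ba0 : b - a != 0 by rewrite subr_eq0 gt_eqF.
have n10 : (n.+1)%:R != 0 :> R by rewrite pnatr_eq0.
case: (boolP (all (root p) (mkseq f n))) => [allr|].
  have U : uniq (mkseq f n).
    rewrite map_inj_uniq ?iota_uniq // => i j.
    rewrite /f => /addrI /(mulfI ba0) /(mulIf (invr_neq0 n10)) /eqP.
    by rewrite eqr_nat eqSS => /eqP.
  by have := max_poly_roots p0 allr U; rewrite size_mkseq ltnn.
move/allPn => [c /mapP [i]]; rewrite mem_iota add0n => /andP[_ hi] -> pc.
exists (f i); split; last exact: pc.
have n1 : 0 < (n.+1)%:R :> R by rewrite ltr0n.
have t0 : 0 < (i.+1)%:R / (n.+1)%:R :> R by rewrite divr_gt0 // ltr0n.
have t1 : (i.+1)%:R / (n.+1)%:R < 1 :> R by rewrite ltr_pdivrMr // mul1r ltr_nat ltnS.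
have ba : 0 < b - a by rewrite subr_gt0.
rewrite /f; apply/andP; split.
  by rewrite ltrDl mulr_gt0.
rewrite -ltrBrDl; rewrite -[X in _ < X]mulr1 ltr_pM2l //.
Qed.


Lemma mulss_ge0 (x : R) : 0 <= x * x.
Proof. by rewrite -expr2 sqr_ge0. Qed.

Lemma poly_int a b p :
  (@lebesgue_measure R).-integrable `[a, b] (EFin \o (fun x => p.[x])).
Proof.
apply: continuous_compact_integrable; first exact: segment_compact.
apply: continuous_subspaceT; exact: continuous_horner.
Qed.

Lemma int_sq_gt0 a b p : a < b -> p != 0 -> 0 < int_ab a b (fun x => (p * p).[x]).
Proof.
move=> ab p0.
have [c [/andP[ac cb] pc]] := exists_nonroot a b p ab p0.
have pc0 : 0 < `|p.[c]| / 2 by rewrite divr_gt0 // normr_gt0.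
have := cvgr_dist_lt (horner p) p.[c] (@continuous_horner R p c) _ pc0.
move=> H2; have H3 : nbhs c (fun t : R => `|p.[c] - p.[t]| < `|p.[c]| / 2) by apply: H2; typeclasses eauto. have [e /= e0 He] := (nbhs_ballP _ _).1 H3.
pose d := Num.min (e / 2) (Num.min (c - a) (b - c)).
have d0 : 0 < d by rewrite /d !lt_min divr_gt0 //= !subr_gt0 ac cb.
have de : d <= e / 2 by rewrite /d ge_min lexx.
have dca : d <= c - a by rewrite /d !ge_min lexx orbT.
have dbc : d <= b - c by rewrite /d !ge_min lexx !orbT.
pose k := (`|p.[c]| / 2) ^+ 2.
have k0 : 0 < k by rewrite /k exprn_gt0.
have Hk : forall x, x \in `[c - d, c + d]%R -> k <= (p * p).[x].
  move=> x; rewrite in_itv /= => /andP[h1 h2].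
  have hx : `|c - x| < e.
    rewrite ltr_norml; apply/andP; split.
      have : e / 2 < e by rewrite ltr_pdivrMr // ltr_pMr //  ltr1n.
      lra.
    have : e / 2 < e by rewrite ltr_pdivrMr // ltr_pMr //  ltr1n.
    lra.
  have := He x hx; rewrite /= => hd.
  have tri : `|p.[c]| <= `|p.[c] - p.[x]| + `|p.[x]|.
    by rewrite -[X in `|X| <= _](subrK p.[x]) ler_normD.
  have hpx : `|p.[c]| / 2 <= `|p.[x]| by lra.
  rewrite hornerM /k -(ger0_norm (mulss_ge0 p.[x])) normrM expr2.
  by apply: ler_pM => //; apply/ltW.
set E := (\int[lebesgue_measure]_(x in `[a, b]) ((p * p).[x])%:E)%E.
have fE : E \is a fin_num by apply: integrable_fin_num => //; exact: (poly_int a b (p * p)).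
have sub : `[c - d, c + d] `<=` `[a, b].
  move=> x /=; rewrite !in_itv /= => /andP[h1 h2]; apply/andP; split; lra.
have le1 : (\int[lebesgue_measure]_(x in `[(c - d)%R, (c + d)%R]) ((p * p).[x])%:E <= E)%E.
  apply: ge0_subset_integral => //.
  - exact: measurable_int (poly_int a b (p * p)).
  - by move=> x _; rewrite lee_fin hornerM mulss_ge0.
have le2 : (\int[lebesgue_measure]_(x in `[(c - d)%R, (c + d)%R]) (cst k%:E) x <=
            \int[lebesgue_measure]_(x in `[(c - d)%R, (c + d)%R]) ((p * p).[x])%:E)%E.
  apply: ge0_le_integral => //.
  - move=> x _ /=. rewrite lee_fin. exact: (ltW k0).
  - exact: measurable_int (poly_int _ _ (p * p)).
rewrite integral_cst // in le2.
have cdd : c - d < c + d by lra.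
have le3 : ((k * (2 * d))%:E <= k%:E * (@lebesgue_measure R) `[(c - d)%R, (c + d)%R])%E.
  rewrite lebesgue_measure_itv /= lte_fin cdd -EFinD -EFinM lee_fin.
  apply: ler_pM; [exact: ltW | lra | exact: lexx | lra].
have fin : E = (fine E)%:E by rewrite fineK.
rewrite /int_ab -/(Rintegral _ _ _) /Rintegral -/E.
rewrite -lte_fin -fin.
apply: lt_le_trans (le_trans le3 (le_trans le2 le1)).
by rewrite lte_fin mulr_gt0 // mulr_gt0.
Qed.

Lemma int_addP a b p q :
  int_ab a b (fun x => (p + q).[x]) = int_ab a b (fun x => p.[x]) + int_ab a b (fun x => q.[x]).
Proof.
rewrite /int_ab -RintegralD //; last 2 first.
- exact: poly_int.
- exact: poly_int.
by apply: eq_Rintegral => x _; rewrite hornerD.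
Qed.

Lemma int_scaleP a b c p :
  int_ab a b (fun x => (c *: p).[x]) = c * int_ab a b (fun x => p.[x]).
Proof.
rewrite /int_ab -RintegralZl //; last exact: poly_int.
by apply: eq_Rintegral => x _; rewrite hornerZ.
Qed.

Lemma int_sumP a b (I : finType) (c : I -> R) (F : I -> {poly R}) :
  int_ab a b (fun x => (\sum_i c i *: F i).[x]) = \sum_i c i * int_ab a b (fun x => (F i).[x]).
Proof.
have h0 : int_ab a b (fun x => (0 : {poly R}).[x]) = 0.
  by rewrite /int_ab (@eq_Rintegral _ _ _ _ _ (fun _ => 0)) ?Rintegral_cst ?mul0r // => x _; rewrite horner0.
rewrite (big_morph (fun p => int_ab a b (fun x => p.[x])) (@int_addP a b) h0).
by apply: eq_bigr => i _; rewrite int_scaleP.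
Qed.

Lemma int_sq_ge0 a b p : 0 <= int_ab a b (fun x => (p * p).[x]).
Proof. by apply: Rintegral_ge0 => x _; rewrite hornerM -expr2 sqr_ge0. Qed.

End An.

Lemma orth (R : realType) (F : {poly R} -> R)
  (Fadd : forall p q, F (p + q) = F p + F q)
  (Fz : forall c p, F (c *: p) = c * F p)
  (N : nat) (X : 'I_N -> R) (d : {poly R}) :
  injective X -> (size d <= N)%N ->
  (forall j, F (d * lagrange_basis X j) = 0) -> F (d * d) = 0.
Proof.
move=> Xinj sd H.
have F0 : F 0 = 0 by rewrite -(scale0r (0 : {poly R})) Fz mul0r.
rewrite {2}(lagrange_interp _ _ _ _ Xinj sd) mulr_sumr.
rewrite (big_morph F Fadd F0) big1 // => j _.
by rewrite -scalerAr Fz H mulr0.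
Qed.

Lemma size_lin (R : realType) (o s : R) : s != 0 -> size (o%:P + s *: 'X) = 2%N.
Proof.
move=> s0; rewrite addrC -mul_polyC size_MXaddC polyC_eq0 (negbTE s0) /=.
by rewrite size_polyC s0.
Qed.

Theorem mainTheorem1 (R : realType) (N : nat) (X : 'I_N -> R)
    (m : nat) (s : 'I_m -> R)
    (phi : {poly R}) (phiXi : 'I_m -> {poly R}) (phistar : {poly R}) :
  (0 < N)%N ->
  injective X ->
  (forall i, root (legendre R N) (2 * X i - 1)) ->
  (0 < m)%N ->
  (forall k, 0 < s k) ->
  \sum_(k < m) s k = 1 ->
  (size phi <= N)%N ->
  (forall k, (size (phiXi k) <= N)%N) ->
  (forall (k : 'I_m) (j : 'I_N),
     int_ab 0 1 (fun z => ((phiXi k).[z] - phi.[mortar_offset s k + s k * z])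
                          * (lagrange_basis X j).[z]) = 0) ->
  (size phistar <= N)%N ->
  (forall j : 'I_N,
     \sum_(k < m)
       int_ab (mortar_offset s k) (mortar_offset s k + s k)
         (fun xi => (phistar.[xi] - (phiXi k).[(xi - mortar_offset s k) / s k])
                    * (lagrange_basis X j).[xi]) = 0) ->
  phistar = phi.
Proof.
move=> N0 Xinj _ m0 s0 _ sphi sXi H1 sstar H2.
pose q k := phi \Po ((mortar_offset s k)%:P + s k *: 'X).
have sk0 : forall k, s k != 0 by move=> k; rewrite gt_eqF.
have eXi : forall k, phiXi k = q k.
  move=> k; apply/eqP; rewrite -subr_eq0; apply/eqP.
  set dk := phiXi k - q k.
  have sdk : (size dk <= N)%N.
    rewrite /dk; apply: (leq_trans (size_polyD _ _)); rewrite geq_max sXi size_polyN /=.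
    by rewrite /q size_comp_poly2 ?size_lin ?sphi.
  have Hd : forall j, int_ab 0 1 (fun x => (dk * lagrange_basis X j).[x]) = 0.
    move=> j; rewrite -[RHS](H1 k j); congr int_ab; apply: boolp.funext => z.
    by rewrite /dk /q !hornerE horner_comp !hornerE.
  have := orth _ (fun p => int_ab 0 1 (fun x => p.[x])) (@int_addP R 0 1) (@int_scaleP R 0 1) _ _ _ Xinj sdk Hd.
  move=> h; apply/eqP/negPn/negP => dk0.
  by have := int_sq_gt0 _ 0 1 dk ltr01 dk0; rewrite h ltxx.
set D := phistar - phi.
have sD : (size D <= N)%N.
  by rewrite /D; apply: (leq_trans (size_polyD _ _)); rewrite geq_max sstar size_polyN.
pose F (p : {poly R}) := \sum_(k < m) int_ab (mortar_offset s k) (mortar_offset s k + s k) (fun x => p.[x]).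
have Fadd : forall p r, F (p + r) = F p + F r.
  by move=> p r; rewrite /F -big_split /=; apply: eq_bigr => k _; rewrite int_addP.
have Fz : forall c p, F (c *: p) = c * F p.
  by move=> c p; rewrite /F mulr_sumr; apply: eq_bigr => k _; rewrite int_scaleP.
have HD : forall j, F (D * lagrange_basis X j) = 0.
  move=> j; rewrite -[RHS](H2 j); apply: eq_bigr => k _; congr int_ab; apply: boolp.funext => xi.
  rewrite /D eXi /q !hornerE horner_comp !hornerE.
  congr (_ * _); congr (_ - _); congr (horner _ _); rewrite /= mulrAC mulfV ?mul1r ?sk0 //; by rewrite addrC subrK.
have := orth _ F Fadd Fz _ _ _ Xinj sD HD.
move/psumr_eq0P => /(_ (fun k _ => int_sq_ge0 _ _ _ _)) /(_ (Ordinal m0) isT).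
move=> h; apply/eqP; rewrite -subr_eq0 -/D; apply/negPn/negP => D0.
have hlt : mortar_offset s (Ordinal m0) < mortar_offset s (Ordinal m0) + s (Ordinal m0) by rewrite ltrDl.
by have := int_sq_gt0 _ _ _ D hlt D0; rewrite h ltxx.
Qed.
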